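(* Let $K$ be a field and $P$ an arbitrary poset. The quotient algebra $FI(P)/\mathrm{Rad}\,FI(P)$ is commutative, where $\mathrm{Rad}$ denotes the Jacobson radical.
   Context: $K$ is a field, $P$ an arbitrary poset. $I(P)$ is the set of functions $\alpha$ assigning to each pair $x\le y$ in $P$ a value $\alpha(x,y)\in K$. An element $\alpha\in I(P)$ is a finitary series if for all $x<y$ in $P$ there are only finitely many pairs $(u,v)$ with $x\le u<v\le y$ and $\alpha(u,v)\neq0$; $FI(P)$ is the set of finitary series. $FI(P)$ is an associative $K$-algebra under pointwise addition and convolution $(\alpha\beta)(x,y)=\sum_{x\le z\le y}\alpha(x,z)\beta(z,y)$. *)

(* Defs.v *)
From HB Require Import structures.
From mathcomp Require Import all_boot all_order all_algebra.
From Stdlib Require Import ClassicalEpsilon.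
Set Implicit Arguments. Unset Strict Implicit. Unset Printing Implicit Defensive.
Import Order.Theory GRing.Theory.
Local Open Scope ring_scope.

(* Elements of I(P) are represented by functions P -> P -> K that vanish
   outside the pairs x <= y (so that equality of functions is equality in I(P)). *)

Definition is_incidence {d : Order.disp_t} {P : porderType d} {K : fieldType}
  (a : P -> P -> K) : Prop :=
  forall x y : P, ~~ (x <= y)%O -> a x y = 0.

Definition is_finitary {d : Order.disp_t} {P : porderType d} {K : fieldType}
  (a : P -> P -> K) : Prop :=
  is_incidence a /\
  forall x y : P, (x < y)%O ->
    exists s : seq (P * P), forall u v : P,
      (x <= u)%O -> (u < v)%O -> (v <= y)%O -> a u v != 0 -> (u, v) \in s.

Definition FI {d : Order.disp_t} {P : porderType d} {K : fieldType}
  (a : P -> P -> K) : Prop := is_finitary a.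

Definition fi_zero {d : Order.disp_t} {P : porderType d} {K : fieldType} :
  P -> P -> K := fun _ _ => 0.

Definition fi_sub {d : Order.disp_t} {P : porderType d} {K : fieldType}
  (a b : P -> P -> K) : P -> P -> K := fun x y => a x y - b x y.

Definition conv_supp {d : Order.disp_t} {P : porderType d} {K : fieldType}
  (a b : P -> P -> K) (x y z : P) : bool :=
  (x <= z)%O && (z <= y)%O && (a x z * b z y != 0).

(* convolution (a b)(x,y) = sum_{x <= z <= y} a(x,z) b(z,y), computed as the
   sum over the (finite, for finitary a b) set of z giving nonzero terms;
   it is 0 when that set is infinite (never happens on FI(P)). *)
Definition conv {d : Order.disp_t} {P : porderType d} {K : fieldType}
  (a b : P -> P -> K) : P -> P -> K := fun x y =>
  match excluded_middle_informative
          (exists s : seq P, uniq s /\ forall z, (z \in s) = conv_supp a b x y z)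
  with
  | left H => \sum_(z <- proj1_sig (constructive_indefinite_description _ H))
                 a x z * b z y
  | right _ => 0
  end.

Definition left_ideal {d : Order.disp_t} {P : porderType d} {K : fieldType}
  (I : (P -> P -> K) -> Prop) : Prop :=
  (forall a, I a -> FI a) /\
  I fi_zero /\
  (forall a b, I a -> I b -> I (fi_sub a b)) /\
  (forall r a, FI r -> I a -> I (conv r a)).

Definition maximal_left_ideal {d : Order.disp_t} {P : porderType d} {K : fieldType}
  (M : (P -> P -> K) -> Prop) : Prop :=
  left_ideal M /\
  (exists a, FI a /\ ~ M a) /\
  (forall J : (P -> P -> K) -> Prop, left_ideal J -> (forall a, M a -> J a) ->
     (forall a, J a -> M a) \/ (forall a, FI a -> J a)).

Definition jacobson_radical {d : Order.disp_t} {P : porderType d} {K : fieldType}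
  (a : P -> P -> K) : Prop :=
  FI a /\ forall M : (P -> P -> K) -> Prop, maximal_left_ideal M -> M a.

(* Main.v *)
Set Warnings "-notation-overridden,-ambiguous-paths".
Require Import Defs.
From HB Require Import structures.
From mathcomp Require Import all_boot all_order all_algebra.
From Stdlib Require Import ClassicalEpsilon Classical FunctionalExtensionality.
Set Implicit Arguments. Unset Strict Implicit. Unset Printing Implicit Defensive.
Import Order.Theory GRing.Theory.
Local Open Scope ring_scope.

Section Inc.
Variables (d : Order.disp_t) (P : porderType d) (K : fieldType).
Implicit Types a b c r s v : P -> P -> K.

Lemma conv_nz a b x y : conv a b x y != 0 -> exists z, conv_supp a b x y z.
Proof.
rewrite /conv; case: excluded_middle_informative => [H|]; last by rewrite eqxx.
case: (constructive_indefinite_description _ H) => t /= [Ut Ht].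
case: t Ut Ht => [|z t] Ut Ht; first by rewrite big_nil eqxx.
by move=> _; exists z; rewrite -Ht mem_head.
Qed.

Lemma prod_nz (u w : K) : u * w != 0 -> (u != 0) && (w != 0).
Proof. by rewrite mulf_eq0 negb_or. Qed.

Lemma conv_sum a b x y (S : seq P) : is_incidence a -> is_incidence b -> uniq S ->
  (forall z, (x <= z)%O -> (z <= y)%O -> a x z * b z y != 0 -> z \in S) ->
  conv a b x y = \sum_(z <- S) a x z * b z y.
Proof.
move=> Ia Ib US HS.
have Hex : exists s : seq P, uniq s /\ forall z, (z \in s) = conv_supp a b x y z.
  exists (filter (conv_supp a b x y) S); split; first exact: filter_uniq.
  move=> z; rewrite mem_filter; case E: conv_supp => //=.
  by move: E; rewrite /conv_supp => /andP[/andP[H1 H2] H3]; apply: HS.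
rewrite /conv; case: excluded_middle_informative => [H|//].
case: (constructive_indefinite_description _ H) => t /= [Ut Ht].
rewrite [RHS](bigID (conv_supp a b x y)) /= [X in _ = _ + X]big1; last first.
  move=> z; rewrite /conv_supp.
  case/boolP: (x <= z)%O => [xz|xz] /=; last by rewrite (Ia _ _ xz) mul0r.
  case/boolP: (z <= y)%O => [zy|zy] /=; last by rewrite (Ib _ _ zy) mulr0.
  by rewrite negbK => /eqP.
rewrite addr0 -[RHS]big_filter.
have Hp : perm_eq t [seq z <- S | conv_supp a b x y z].
  apply: uniq_perm => //; first exact: filter_uniq.
  move=> z; rewrite mem_filter Ht; case E: conv_supp => //=; symmetry.
  by move: E; rewrite /conv_supp => /andP[/andP[H1 H2] H3]; apply: HS.
by rewrite (perm_big _ Hp).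
Qed.

Lemma inc_conv a b : is_incidence (conv a b).
Proof.
move=> x y nxy; apply/eqP; apply: contraT => /conv_nz [z].
rewrite /conv_supp => /andP[/andP[H1 H2] _].
by move: nxy; rewrite (le_trans H1 H2).
Qed.

Definition covers a x y (S : seq P) := forall u w, (x <= u)%O -> (u < w)%O ->
  (w <= y)%O -> a u w != 0 -> (u \in S) && (w \in S).

Lemma cover_ex a : FI a -> forall x y, exists S, covers a x y S.
Proof.
move=> [Ia Fa] x y; case/boolP: (x < y)%O => xy.
  have [s Hs] := Fa x y xy.
  exists (map fst s ++ map snd s) => u w xu uw wy nz.
  have := Hs u w xu uw wy nz => us.
  by rewrite !mem_cat (map_f fst us) (map_f snd us) orbT.
exists [::] => u w xu uw wy _; exfalso.
by move: xy; rewrite (le_lt_trans xu (lt_le_trans uw wy)).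
Qed.

Lemma FI_of_cover a : is_incidence a ->
  (forall x y, (x < y)%O -> exists S, covers a x y S) -> FI a.
Proof.
move=> Ia H; split => // x y xy; have [S HS] := H x y xy.
exists [seq (u, w) | u <- S, w <- S] => u w xu uw wy nz.
by case/andP: (HS u w xu uw wy nz) => uS wS; apply: allpairs_f.
Qed.

Lemma FI_zero : FI (@fi_zero d P K).
Proof. apply: FI_of_cover => [//|x y _]; exists [::] => u w _ _ _; by rewrite eqxx. Qed.

Definition fi_one : P -> P -> K := fun x y => if x == y then 1 else 0.

Lemma FI_one : FI fi_one.
Proof.
apply: FI_of_cover => [x y|x y _].
  by move=> nxy; rewrite /fi_one; case: eqP nxy => // ->; rewrite lexx.
exists [::] => u w _ uw _; rewrite /fi_one; case: ifP => [/eqP E|]; last by rewrite eqxx.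
by move: uw; rewrite E ltxx.
Qed.

Lemma FI_sub a b : FI a -> FI b -> FI (fi_sub a b).
Proof.
move=> Fa Fb; apply: FI_of_cover => [x y nxy|x y _].
  by rewrite /fi_sub (proj1 Fa) ?(proj1 Fb) ?subr0.
have [Sa Ha] := cover_ex Fa x y; have [Sb Hb] := cover_ex Fb x y.
exists (Sa ++ Sb) => u w xu uw wy; rewrite /fi_sub !mem_cat.
case/boolP: (a u w == 0) => [/eqP ->|na] nz.
  have nb : b u w != 0 by move: nz; rewrite sub0r oppr_eq0.
  by case/andP: (Hb u w xu uw wy nb) => -> ->; rewrite !orbT.
by case/andP: (Ha u w xu uw wy na) => -> ->.
Qed.

Lemma FI_conv a b : FI a -> FI b -> FI (conv a b).
Proof.
move=> Fa Fb; apply: FI_of_cover => [|x y _]; first exact: inc_conv.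
have [Sa Ha] := cover_ex Fa x y; have [Sb Hb] := cover_ex Fb x y.
exists (Sa ++ Sb) => u w xu uw wy /conv_nz [z].
rewrite /conv_supp => /andP[/andP[uz zw] /prod_nz /andP[na nb]].
rewrite !mem_cat.
move: uz; rewrite le_eqVlt => /orP[/eqP E|uz].
  subst z; have zw' : (u < w)%O := uw.
  by case/andP: (Hb u w xu zw' wy nb) => -> ->; rewrite !orbT.
have xz : (x <= z)%O := le_trans xu (ltW uz).
case/andP: (Ha u z xu uz (le_trans zw wy) na) => -> zS /=.
move: zw; rewrite le_eqVlt => /orP[/eqP E|zw].
  by subst z; rewrite zS.
by case/andP: (Hb z w xz zw wy nb) => _ ->; rewrite orbT.
Qed.


Lemma row_of_cover a x y S : covers a x y S ->
  forall z, (x <= z)%O -> (z <= y)%O -> a x z != 0 -> z \in x :: S.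
Proof.
move=> H z xz zy nz; rewrite in_cons; move: (xz); rewrite le_eqVlt => /orP[/eqP->|xz'].
  by rewrite eqxx.
by case/andP: (H x z (lexx x) xz' zy nz) => _ ->; rewrite orbT.
Qed.

Lemma inc_of_FI a : FI a -> is_incidence a.
Proof. by case. Qed.

Lemma conv_0l c : conv fi_zero c = @fi_zero d P K.
Proof.
apply: functional_extensionality => x; apply: functional_extensionality => y.
apply/eqP; apply: contraT => /conv_nz [z].
by rewrite /conv_supp /fi_zero mul0r eqxx andbF.
Qed.

Lemma fi_one_inc : is_incidence fi_one.
Proof. exact: inc_of_FI FI_one. Qed.

Lemma conv_1l c : is_incidence c -> conv fi_one c = c.
Proof.
move=> Ic; apply: functional_extensionality => x; apply: functional_extensionality => y.
have Io := fi_one_inc.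
rewrite (@conv_sum _ _ _ _ [:: x]) //.
  by rewrite big_seq1 /fi_one eqxx mul1r.
move=> z _ _ /prod_nz /andP[]; rewrite /fi_one; case: ifP => [/eqP ->|_]; first by rewrite mem_head.
by rewrite eqxx.
Qed.

Lemma conv_1r a : is_incidence a -> conv a fi_one = a.
Proof.
move=> Ia; apply: functional_extensionality => x; apply: functional_extensionality => y.
have Io := fi_one_inc.
rewrite (@conv_sum _ _ _ _ [:: y]) //.
  by rewrite big_seq1 /fi_one eqxx mulr1.
move=> z _ _ /prod_nz /andP[_]; rewrite /fi_one; case: ifP => [/eqP ->|_]; first by rewrite mem_head.
by rewrite eqxx.
Qed.

Lemma conv_subl r1 r2 c : FI r1 -> FI r2 -> FI c ->
  conv (fi_sub r1 r2) c = fi_sub (conv r1 c) (conv r2 c).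
Proof.
move=> F1 F2 Fc; apply: functional_extensionality => x; apply: functional_extensionality => y.
have [C1 H1] := cover_ex F1 x y; have [C2 H2] := cover_ex F2 x y.
have I1 := inc_of_FI F1; have I2 := inc_of_FI F2; have Ic := inc_of_FI Fc.
have I12 := inc_of_FI (FI_sub F1 F2).
set S := undup (x :: C1 ++ C2).
have US : uniq S := undup_uniq _.
rewrite /fi_sub (@conv_sum _ _ _ _ S) // ?(@conv_sum r1 _ _ _ S) ?(@conv_sum r2 _ _ _ S) //.
- by rewrite -sumrB; apply: eq_bigr => z _; rewrite mulrBl.
- move=> z xz zy /prod_nz /andP[nz _]; have := row_of_cover H2 xz zy nz.
  by rewrite mem_undup !in_cons !mem_cat => /orP[->|->]; rewrite ?orbT.
- move=> z xz zy /prod_nz /andP[nz _]; have := row_of_cover H1 xz zy nz.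
  by rewrite mem_undup !in_cons !mem_cat => /orP[->|->]; rewrite ?orbT.
- move=> z xz zy /prod_nz /andP[nz _].
  rewrite mem_undup !in_cons !mem_cat.
  case/boolP: (r1 x z == 0) => [/eqP E|n1].
    have n2 : r2 x z != 0 by move: nz; rewrite E sub0r oppr_eq0.
    by have := row_of_cover H2 xz zy n2; rewrite in_cons => /orP[->|->]; rewrite ?orbT.
  by have := row_of_cover H1 xz zy n1; rewrite in_cons => /orP[->|->]; rewrite ?orbT.
Qed.

Lemma conv_subr r a b : FI r -> FI a -> FI b ->
  conv r (fi_sub a b) = fi_sub (conv r a) (conv r b).
Proof.
move=> Fr Fa Fb; apply: functional_extensionality => x; apply: functional_extensionality => y.
have [C1 H1] := cover_ex Fr x y.
have Ir := inc_of_FI Fr; have Ia := inc_of_FI Fa; have Ib := inc_of_FI Fb.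
have Iab := inc_of_FI (FI_sub Fa Fb).
set S := undup (x :: C1).
have US : uniq S := undup_uniq _.
have HS : forall (g : P -> P -> K) z, (x <= z)%O -> (z <= y)%O -> r x z * g z y != 0 -> z \in S.
  by move=> g z xz zy /prod_nz /andP[nz _]; rewrite /S mem_undup; exact: (row_of_cover H1 xz zy nz).
rewrite /fi_sub (@conv_sum _ _ _ _ S) // ?(@conv_sum _ a _ _ S) ?(@conv_sum _ b _ _ S) //;
  try by move=> z; apply: HS.
  2: by move=> z; apply: (HS (fun u w => a u w - b u w)).
by rewrite -sumrB; apply: eq_bigr => z _; rewrite mulrBr.
Qed.

Lemma conv_assoc r' r c : FI r' -> FI r -> FI c ->
  conv r' (conv r c) = conv (conv r' r) c.
Proof.
move=> F1 F2 F3; apply: functional_extensionality => x; apply: functional_extensionality => y.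
have [C1 H1] := cover_ex F1 x y; have [C2 H2] := cover_ex F2 x y.
have I1 := inc_of_FI F1; have I2 := inc_of_FI F2; have I3 := inc_of_FI F3.
have I23 := inc_conv r c; have I12 := inc_conv r' r.
set S := undup (x :: C1 ++ C2).
have US : uniq S := undup_uniq _.
have inS1 : forall z, z \in x :: C1 -> z \in S.
  by move=> z; rewrite mem_undup !in_cons mem_cat => /orP[->|->]; rewrite ?orbT.
have inS2 : forall z, z \in C2 -> z \in S.
  by move=> z; rewrite mem_undup !in_cons mem_cat => ->; rewrite !orbT.
rewrite (@conv_sum _ _ _ _ S) //; last first.
  by move=> z xz zy /prod_nz /andP[nz _]; apply/inS1/(row_of_cover H1 xz zy nz).
rewrite [RHS](@conv_sum _ _ _ _ S) //; last first.
  move=> w xw wy /prod_nz /andP[/conv_nz [z] + _].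
  rewrite /conv_supp => /andP[/andP[xz zw] /prod_nz /andP[n1 n2]].
  move: zw; rewrite le_eqVlt => /orP[/eqP E|zw].
    by subst z; apply/inS1/(row_of_cover H1 xz wy n1).
  by apply: inS2; case/andP: (H2 z w xz zw wy n2).
have -> : \sum_(z <- S) r' x z * conv r c z y =
          \sum_(z <- S) \sum_(w <- S) r' x z * r z w * c w y.
  apply: eq_big_seq => z zS.
  case/boolP: (x <= z)%O => xz; last first.
    by rewrite (I1 _ _ xz) mul0r big1 // => w _; rewrite mul0r mul0r.
  rewrite (@conv_sum _ _ _ _ S) // ?mulr_sumr; last first.
    move=> w zw wy /prod_nz /andP[n2 _].
    move: zw; rewrite le_eqVlt => /orP[/eqP <-|zw] //.
    by apply: inS2; case/andP: (H2 z w xz zw wy n2).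
  by apply: eq_bigr => w _; rewrite mulrA.
rewrite exchange_big /=; apply: eq_big_seq => w wS.
case/boolP: (w <= y)%O => wy; last first.
  by rewrite (I3 _ _ wy) mulr0 big1 // => z _; rewrite mulr0.
rewrite (@conv_sum _ _ _ _ S) // ?mulr_suml //.
move=> z xz zw /prod_nz /andP[n1 _].
by apply/inS1/(row_of_cover H1 xz (le_trans zw wy) n1).
Qed.


Fixpoint fpow v k : P -> P -> K := if k is k'.+1 then conv (fpow v k') v else fi_one.

Lemma FI_pow v k : FI v -> FI (fpow v k).
Proof. by move=> Fv; elim: k => [|k IH] /=; [exact: FI_one | exact: FI_conv]. Qed.

Lemma count_lt (T : Type) (p q : pred T) (s : seq T) :
  (forall z, p z -> q z) -> has (fun z => q z && ~~ p z) s -> (count p s < count q s)%N.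
Proof.
move=> pq; elim: s => [//|h s IH] /=; case/orP => [/andP[qh nph]|Hs].
  rewrite qh (negbTE nph) /= ltnS; apply: sub_count => z; exact: pq.
have := IH Hs; case: (p h) (pq h) => [qh'|_] /= H.
  by rewrite (qh' isT) ltn_add2l.
by apply: leq_trans H _; apply: leq_addl.
Qed.

Section Pow.
Variable v : P -> P -> K.
Hypothesis Fv : FI v.
Hypothesis Zv : forall x, v x x = 0.

Lemma pow_nz_pairs x y S : covers v x y S -> forall k u w, (x <= u)%O -> (u < w)%O ->
  (w <= y)%O -> fpow v k u w != 0 -> (u \in S) && (w \in S).
Proof.
move=> HS; elim=> [|k IH] u w xu uw wy /=.
  by rewrite /fi_one (lt_eqF uw) eqxx.
move=> /conv_nz [z]; rewrite /conv_supp => /andP[/andP[uz zw] /prod_nz /andP[nk nv]].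
have zw' : (z < w)%O.
  rewrite lt_neqAle zw andbT; apply/eqP => E; move: nv; by rewrite E Zv eqxx.
have xz : (x <= z)%O := le_trans xu uz.
case/andP: (HS z w xz zw' wy nv) => zS ->; rewrite andbT.
move: uz; rewrite le_eqVlt => /orP[/eqP->//|uz].
by case/andP: (IH u z xu uz (le_trans zw wy) nk).
Qed.

Lemma pow_count x y S : covers v x y S -> forall k w, (x <= w)%O -> (w <= y)%O ->
  fpow v k x w != 0 -> (k <= count (fun z => (x <= z)%O && (z < w)%O) S)%N.
Proof.
move=> HS; elim=> [//|k IH] w xw wy /=.
move=> /conv_nz [z]; rewrite /conv_supp => /andP[/andP[xz zw] /prod_nz /andP[nk nv]].
have zw' : (z < w)%O.
  rewrite lt_neqAle zw andbT; apply/eqP => E; move: nv; by rewrite E Zv eqxx.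
have := IH z xz (le_trans zw wy) nk => H.
apply: leq_ltn_trans H _; apply: count_lt.
  by move=> t /andP[-> tz]; rewrite (lt_trans tz zw').
apply/hasP; exists z; first by case/andP: (HS z w xz zw' wy nv).
by rewrite xz zw' ltxx.
Qed.

Lemma pow_vanish x y S : covers v x y S -> forall k w, (w <= y)%O ->
  (size S < k)%N -> fpow v k x w = 0.
Proof.
move=> HS k w wy Hk; case/boolP: (x <= w)%O => xw; last first.
  by rewrite (inc_of_FI (FI_pow k Fv) xw).
apply/eqP; apply: contraT => nz.
have := pow_count HS xw wy nz => H.
have := leq_trans H (count_size _ _); by rewrite leqNgt Hk.
Qed.

Definition bnd x y : nat :=
  match excluded_middle_informative
    (exists n, forall k, (n <= k)%N -> fpow v k x y = 0) with
  | left H => proj1_sig (constructive_indefinite_description _ H)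
  | right _ => 0%N
  end.

Definition finv : P -> P -> K := fun x y => \sum_(0 <= k < bnd x y) fpow v k x y.

Lemma trunc_sum (f : nat -> K) n m : (forall k, (n <= k)%N -> f k = 0) ->
  (forall k, (m <= k)%N -> f k = 0) ->
  \sum_(0 <= k < n) f k = \sum_(0 <= k < m) f k.
Proof.
wlog nm : n m / (n <= m)%N.
  move=> W Hn Hm; case/orP: (leq_total n m) => H; first exact: W.
  by symmetry; apply: W.
move=> Hn _; rewrite (@big_cat_nat _ _ _ n 0 m) // /= [X in _ = _ + X]big_nat_cond.
rewrite [X in _ = _ + X]big1 ?addr0 // => k /andP[/andP[nk _] _]; exact: Hn.
Qed.

Lemma finv_eq x y m : (forall k, (m <= k)%N -> fpow v k x y = 0) ->
  finv x y = \sum_(0 <= k < m) fpow v k x y.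
Proof.
move=> Hm; rewrite /finv /bnd; case: excluded_middle_informative => [H|nH]; last first.
  by exfalso; apply: nH; exists m.
case: (constructive_indefinite_description _ H) => n Hn /=.
exact: trunc_sum.
Qed.

Lemma finv_inc : is_incidence finv.
Proof.
move=> x y nxy; rewrite /finv big1 // => k _.
exact: (inc_of_FI (FI_pow k Fv) nxy).
Qed.

Lemma sum_nz (I : Type) (r : seq I) (F : I -> K) :
  \sum_(i <- r) F i != 0 -> exists i, F i != 0.
Proof.
move=> H; apply: NNPP => Hn; move/eqP: H; apply; apply: big1 => i _.
apply/eqP; apply: contraT => Hi; case: Hn; by exists i.
Qed.

Lemma FI_finv : FI finv.
Proof.
apply: FI_of_cover => [|x y _]; first exact: finv_inc.
have [S HS] := cover_ex Fv x y.
exists S => u w xu uw wy; rewrite /finv => /sum_nz [k nz].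
exact: (pow_nz_pairs HS xu uw wy nz).
Qed.

Lemma conv_finv : conv finv v = fi_sub finv fi_one.
Proof.
apply: functional_extensionality => x; apply: functional_extensionality => y.
have [C HC] := cover_ex Fv x y.
set m := (size C).+1.
have Hvan : forall w, (w <= y)%O -> forall k, (m <= k)%N -> fpow v k x w = 0.
  by move=> w wy k mk; apply: (pow_vanish HC wy).
set S := undup (x :: C).
have US : uniq S := undup_uniq _.
have Ii := finv_inc; have Iv := inc_of_FI Fv.
have rowS : forall k z, (x <= z)%O -> (z <= y)%O -> fpow v k x z != 0 -> z \in S.
  move=> k z xz zy nz; rewrite /S mem_undup in_cons.
  move: (xz); rewrite le_eqVlt => /orP[/eqP->|xz']; first by rewrite eqxx.
  by case/andP: (pow_nz_pairs HC (lexx x) xz' zy nz) => _ ->; rewrite orbT.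
rewrite (@conv_sum _ _ _ _ S) //; last first.
  move=> z xz zy /prod_nz /andP[+ _]; rewrite /finv => /sum_nz [k nz].
  exact: (rowS k z xz zy nz).
have -> : \sum_(z <- S) finv x z * v z y =
          \sum_(z <- S) \sum_(0 <= k < m) fpow v k x z * v z y.
  apply: eq_bigr => z _; case/boolP: (z <= y)%O => zy; last first.
    by rewrite (Iv _ _ zy) mulr0 big1 // => k _; rewrite mulr0.
  by rewrite (finv_eq (Hvan z zy)) mulr_suml.
rewrite exchange_big /=.
have -> : \sum_(0 <= k < m) \sum_(z <- S) fpow v k x z * v z y =
          \sum_(0 <= k < m) fpow v k.+1 x y.
  apply: eq_bigr => k _ /=.
  rewrite (@conv_sum _ _ _ _ S) //.
  - exact: (inc_of_FI (FI_pow k Fv)).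
  - by move=> z xz zy /prod_nz /andP[nz _]; exact: (rowS k z xz zy nz).
rewrite /fi_sub (@finv_eq x y m.+1); last first.
  by move=> k mk; apply: Hvan => //; apply: ltnW.
by rewrite [in RHS]big_nat_recl //= (addrC (fi_one x y)) addrK.
Qed.

End Pow.

Lemma conv_diag a b x : is_incidence a -> is_incidence b -> conv a b x x = a x x * b x x.
Proof.
move=> Ia Ib; rewrite (@conv_sum _ _ _ _ [:: x]) // ?big_seq1 //.
by move=> z xz zx _; rewrite (@le_anti _ _ z x) ?mem_head // zx xz.
Qed.

Lemma conv_diag0 r c x : c x x = 0 -> conv r c x x = 0.
Proof.
move=> Hc; apply/eqP; apply: contraT => /conv_nz [z].
rewrite /conv_supp => /andP[/andP[xz zx]].
by rewrite (@le_anti _ _ z x) ?zx ?xz // Hc mulr0 eqxx.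
Qed.

End Inc.

Theorem corollary3 (d : Order.disp_t) (P : porderType d) (K : fieldType)
  (a b : P -> P -> K) :
  FI a -> FI b -> jacobson_radical (fi_sub (conv a b) (conv b a)).
Proof.
move=> Fa Fb.
set c := fi_sub (conv a b) (conv b a).
have Fc : FI c by apply: FI_sub; apply: FI_conv.
have Zc : forall x, c x x = 0.
  move=> x; have Ia := inc_of_FI Fa; have Ib := inc_of_FI Fb.
  by rewrite /c /fi_sub !conv_diag // mulrC subrr.
split => // M [[MFI [M0 [Msub Mmul]]] [[a0 [Fa0 nMa0]] Mmax]].
case: (classic (M c)) => // nMc; exfalso.
pose J := fun w => FI w /\ exists r, FI r /\ M (fi_sub w (conv r c)).
have LJ : left_ideal J.
  split; first by move=> w [].
  split.
    split; first exact: FI_zero.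
    exists fi_zero; split; first exact: FI_zero.
    rewrite conv_0l.
    have -> : fi_sub (@fi_zero d P K) fi_zero = fi_zero.
      by do 2 apply: functional_extensionality => ?; rewrite /fi_sub /fi_zero subr0.
    exact: M0.
  split.
    move=> w1 w2 [F1 [r1 [Fr1 M1]]] [F2 [r2 [Fr2 M2]]].
    split; first exact: FI_sub.
    exists (fi_sub r1 r2); split; first exact: FI_sub.
    rewrite conv_subl //.
    have -> : fi_sub (fi_sub w1 w2) (fi_sub (conv r1 c) (conv r2 c)) =
              fi_sub (fi_sub w1 (conv r1 c)) (fi_sub w2 (conv r2 c)).
      do 2 apply: functional_extensionality => ?; rewrite /fi_sub.
      by rewrite !opprB addrACA [RHS]addrACA (addrC (- w2 _ _)).
    exact: Msub.
  move=> r' w Fr' [Fw [r [Fr Mw]]].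
  split; first exact: FI_conv.
  exists (conv r' r); split; first exact: FI_conv.
  rewrite -conv_assoc // -conv_subr //; last exact: FI_conv.
  exact: Mmul.
have MJ : forall w, M w -> J w.
  move=> w Mw; split; first exact: MFI.
  exists fi_zero; split; first exact: FI_zero.
  rewrite conv_0l.
  have -> : fi_sub w fi_zero = w.
    by do 2 apply: functional_extensionality => ?; rewrite /fi_sub /fi_zero subr0.
  exact: Mw.
case: (Mmax J LJ MJ) => [JM|Jall].
  apply: nMc; apply: JM; split => //.
  exists (@fi_one d P K); split; first exact: FI_one.
  rewrite conv_1l; last exact: inc_of_FI.
  have -> : fi_sub c c = fi_zero.
    by do 2 apply: functional_extensionality => ?; rewrite /fi_sub /fi_zero subrr.
  exact: M0.
have [_ [r [Fr Mu]]] := Jall _ (@FI_one d P K).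
set v := conv r c in Mu.
have Fv : FI v by apply: FI_conv.
have Zv : forall x, v x x = 0 by move=> x; apply: conv_diag0.
have M1 : M (@fi_one d P K).
  have := Mmul _ _ (FI_finv Fv Zv) Mu.
  rewrite conv_subr //; [|exact: (FI_finv Fv Zv)|exact: (@FI_one d P K)].
  rewrite conv_finv // conv_1r; last exact: finv_inc.
  have -> : fi_sub (finv v) (fi_sub (finv v) (@fi_one d P K)) = (@fi_one d P K).
    by do 2 apply: functional_extensionality => ?; rewrite /fi_sub opprB addrC subrK.
  by [].
apply: nMa0; rewrite -(conv_1r (inc_of_FI Fa0)); exact: Mmul.
Qed.
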